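(* For every term $t\in T( *,\circ,x)$ and every word $w\in\mathcal{W}$ such that $t\cdot\mathit{eval}(w)$ is defined, the equality $\mathtt{Cc}(t\cdot\mathit{eval}(w))=\mathtt{Cc}(t)\cdot\mathrm{sh}_0(\mathtt{eval}(w))$ holds in the group $G_{\mathtt{ALD}}$. (That is, $\mathtt{Cc}$ is an $\mathrm{sh}_0$-blueprint for the $\mathtt{ALD}$-laws.)
   Context: $T( *,\circ,x)$: terms in the single variable $x$ with binary symbols $*,\circ$. Addresses: finite sequences over $\{0,1\}$, $\varepsilon$ empty, concatenation written by juxtaposition; $t/\alpha$ the subterm at $\alpha$. Two addresses are incomparable if neither is a prefix of the other. Partial operators on terms (acting on the right): $S^{+}_{\alpha}$ is defined on $t$ iff $t/\alpha=t_1*(t_2\square t_3)$ with $\square\in\{*,\circ\}$ and replaces it by $(t_1*t_2)\square(t_1*t_3)$; $A^{+}_{\alpha}$ is defined iff $t/\alpha=t_1*(t_2*t_3)$ and replaces it by $(t_1\circ t_2)*t_3$; $S^-_\alpha,A^-_\alpha$ are the inverse partial maps. $\mathcal{W}$ is the free monoid on the letters $S^{\pm}_\alpha,A^{\pm}_\alpha$; $\mathit{eval}(w)$ is the partial map obtained by applying the letters of $w$ from left to right. $G_{\mathtt{ALD}}$ is the group generated by elements $S_\alpha,A_\alpha$ ($\alpha\in\{0,1\}^*$) subject to the following relations, where $X,Y$ each stand for $S$ or $A$ and $\alpha,\beta,\delta$ are arbitrary addresses ($\delta$ possibly empty): $X_\alpha Y_\beta=Y_\beta X_\alpha$ for $\alpha,\beta$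 incomparable; $X_{\alpha0\delta}S_\alpha=S_\alpha X_{\alpha00\delta}X_{\alpha10\delta}$; $X_{\alpha10\delta}S_\alpha=S_\alpha X_{\alpha01\delta}$; $X_{\alpha11\delta}S_\alpha=S_\alpha X_{\alpha11\delta}$; $X_{\alpha0\delta}A_\alpha=A_\alpha X_{\alpha00\delta}$; $X_{\alpha10\delta}A_\alpha=A_\alpha X_{\alpha01\delta}$; $X_{\alpha11\delta}A_\alpha=A_\alpha X_{\alpha1\delta}$; $S_\alpha S_{\alpha1}S_\alpha=S_{\alpha1}S_\alpha S_{\alpha1}S_{\alpha0}$; $S_\alpha S_{\alpha1}A_\alpha=A_{\alpha1}S_\alpha S_{\alpha0}$; $A_\alpha S_\alpha=S_{\alpha1}S_\alpha A_{\alpha1}A_{\alpha0}$. $\mathtt{eval}:\mathcal{W}\to G_{\mathtt{ALD}}$ is the monoid homomorphism with $S^{+}_\alpha\mapsto S_\alpha$, $S^-_\alpha\mapsto S_\alpha^{-1}$, $A^+_\alpha\mapsto A_\alpha$, $A^-_\alpha\mapsto A_\alpha^{-1}$. For an address $\beta$, $\mathrm{sh}_\beta$ is the endomorphism of $G_{\mathtt{ALD}}$ with $S_\alpha\mapsto S_{\beta\alpha}$, $A_\alpha\mapsto A_{\beta\alpha}$. $\mathtt{Cc}:T( *,\circ,x)\to G_{\mathtt{ALD}}$ is defined by $\mathtt{Cc}(x)=1$, $\mathtt{Cc}(t_1*t_2)=\mathtt{Cc}(t_1)\,\mathrm{sh}_1(\mathtt{Cc}(t_2))\,S_\varepsilon\,\mathrm{sh}_1(\mathtt{Cc}(t_1))^{-1}$,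 $\mathtt{Cc}(t_1\circ t_2)=\mathtt{Cc}(t_1)\,\mathrm{sh}_1(\mathtt{Cc}(t_2))\,A_\varepsilon$. *)

(* Defs.v *)
From Stdlib Require Import List Bool.
Import ListNotations.

Inductive term : Type :=
| Var : term
| Star : term -> term -> term
| Circ : term -> term -> term.

Definition term_eq_dec (t u : term) : {t = u} + {t <> u}.
Proof. decide equality. Defined.

(** Addresses: finite sequences over {0,1}; false = 0 (left), true = 1 (right). *)
Definition address := list bool.

Fixpoint at_addr (f : term -> option term) (a : address) (t : term) : option term :=
  match a with
  | nil => f t
  | b :: a' =>
    match t with
    | Var => None
    | Star t1 t2 =>
        if b then option_map (Star t1) (at_addr f a' t2)
        else option_map (fun u => Star u t2) (at_addr f a' t1)
    | Circ t1 t2 =>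
        if b then option_map (Circ t1) (at_addr f a' t2)
        else option_map (fun u => Circ u t2) (at_addr f a' t1)
    end
  end.

Definition Splus_root (t : term) : option term :=
  match t with
  | Star t1 (Star t2 t3) => Some (Star (Star t1 t2) (Star t1 t3))
  | Star t1 (Circ t2 t3) => Some (Circ (Star t1 t2) (Star t1 t3))
  | _ => None
  end.

Definition Sminus_root (t : term) : option term :=
  match t with
  | Star (Star t1 t2) (Star t1' t3) =>
      if term_eq_dec t1 t1' then Some (Star t1 (Star t2 t3)) else None
  | Circ (Star t1 t2) (Star t1' t3) =>
      if term_eq_dec t1 t1' then Some (Star t1 (Circ t2 t3)) else None
  | _ => None
  end.

Definition Aplus_root (t : term) : option term :=
  match t with
  | Star t1 (Star t2 t3) => Some (Star (Circ t1 t2) t3)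
  | _ => None
  end.

Definition Aminus_root (t : term) : option term :=
  match t with
  | Star (Circ t1 t2) t3 => Some (Star t1 (Star t2 t3))
  | _ => None
  end.

(** Letters of the free monoid W: S^{+-}_a, A^{+-}_a.
    The boolean is the sign: true = +, false = -. *)
Inductive letter : Type :=
| LS : bool -> address -> letter
| LA : bool -> address -> letter.

Definition word := list letter.

Definition eval_letter (l : letter) : term -> option term :=
  match l with
  | LS true a => at_addr Splus_root a
  | LS false a => at_addr Sminus_root a
  | LA true a => at_addr Aplus_root a
  | LA false a => at_addr Aminus_root a
  end.

Fixpoint eval (w : word) (t : term) : option term :=
  match w with
  | nil => Some t
  | l :: w' =>
    match eval_letter l t with
    | Some t' => eval w' t'
    | None => None
    end
  end.

(** The group G_ALD, presented by generators S_a, A_a and relations.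
    Elements are represented by group words (lists of generators with an
    inversion flag); equality in G_ALD is the congruence [geq] generated by
    free cancellation and the defining relations. *)
Inductive kind : Type := KS | KA.
Definition gen : Type := (kind * address)%type.
(* (g, false) = g ; (g, true) = g^{-1} *)
Definition gword := list (gen * bool).

Definition g (k : kind) (a : address) : gword := [((k, a), false)].

Definition ginv (u : gword) : gword :=
  rev (map (fun p => (fst p, negb (snd p))) u).

Fixpoint is_prefix (a b : address) : bool :=
  match a, b with
  | nil, _ => true
  | x :: a', y :: b' => Bool.eqb x y && is_prefix a' b'
  | _ :: _, nil => false
  end.

Definition incomparable (a b : address) : Prop :=
  is_prefix a b = false /\ is_prefix b a = false.

Definition c0 (a d : address) := a ++ false :: d.
Definition c1 (a d : address) := a ++ true :: d.
Definition c00 (a d : address) := a ++ false :: false :: d.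
Definition c01 (a d : address) := a ++ false :: true :: d.
Definition c10 (a d : address) := a ++ true :: false :: d.
Definition c11 (a d : address) := a ++ true :: true :: d.

Inductive ald_rel : gword -> gword -> Prop :=
| rel_comm X Y a b : incomparable a b ->
    ald_rel (g X a ++ g Y b) (g Y b ++ g X a)
| rel_S0 X a d :
    ald_rel (g X (c0 a d) ++ g KS a) (g KS a ++ g X (c00 a d) ++ g X (c10 a d))
| rel_S10 X a d :
    ald_rel (g X (c10 a d) ++ g KS a) (g KS a ++ g X (c01 a d))
| rel_S11 X a d :
    ald_rel (g X (c11 a d) ++ g KS a) (g KS a ++ g X (c11 a d))
| rel_A0 X a d :
    ald_rel (g X (c0 a d) ++ g KA a) (g KA a ++ g X (c00 a d))
| rel_A10 X a d :
    ald_rel (g X (c10 a d) ++ g KA a) (g KA a ++ g X (c01 a d))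
| rel_A11 X a d :
    ald_rel (g X (c11 a d) ++ g KA a) (g KA a ++ g X (c1 a d))
| rel_SSS a :
    ald_rel (g KS a ++ g KS (a ++ [true]) ++ g KS a)
            (g KS (a ++ [true]) ++ g KS a ++ g KS (a ++ [true]) ++ g KS (a ++ [false]))
| rel_SSA a :
    ald_rel (g KS a ++ g KS (a ++ [true]) ++ g KA a)
            (g KA (a ++ [true]) ++ g KS a ++ g KS (a ++ [false]))
| rel_AS a :
    ald_rel (g KA a ++ g KS a)
            (g KS (a ++ [true]) ++ g KS a ++ g KA (a ++ [true]) ++ g KA (a ++ [false])).

Inductive geq : gword -> gword -> Prop :=
| geq_refl u : geq u u
| geq_sym u v : geq u v -> geq v u
| geq_trans u v w : geq u v -> geq v w -> geq u w
| geq_cat u u' v v' : geq u u' -> geq v v' -> geq (u ++ v) (u' ++ v')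
| geq_cancel x e : geq [(x, e); (x, negb e)] []
| geq_rel u v : ald_rel u v -> geq u v.

Definition sh (beta : address) (u : gword) : gword :=
  map (fun p => ((fst (fst p), beta ++ snd (fst p)), snd p)) u.

Definition evalG_letter (l : letter) : gen * bool :=
  match l with
  | LS s a => ((KS, a), negb s)
  | LA s a => ((KA, a), negb s)
  end.

Definition evalG (w : word) : gword := map evalG_letter w.

Fixpoint Cc (t : term) : gword :=
  match t with
  | Var => nil
  | Star t1 t2 => Cc t1 ++ sh [true] (Cc t2) ++ g KS nil ++ ginv (sh [true] (Cc t1))
  | Circ t1 t2 => Cc t1 ++ sh [true] (Cc t2) ++ g KA nil
  end.

(* Main.v *)
Require Import Defs.
From Stdlib Require Import List Bool Setoid Morphisms.
Import ListNotations.

#[local] Instance geq_Equivalence : Equivalence geq.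
Proof. split; [intro; apply geq_refl | intros ?? H; apply geq_sym, H | intros ??? H1 H2; eapply geq_trans; eauto]. Qed.

#[local] Instance app_Proper : Proper (geq ==> geq ==> geq) (@app (gen*bool)).
Proof. intros ?? H ?? H'. apply geq_cat; auto. Qed.

Lemma sh_app b u v : sh b (u ++ v) = sh b u ++ sh b v.
Proof. unfold sh; apply map_app. Qed.

Lemma ginv_app u v : ginv (u ++ v) = ginv v ++ ginv u.
Proof. unfold ginv; rewrite map_app, rev_app_distr; reflexivity. Qed.

Lemma ginv_involutive u : ginv (ginv u) = u.
Proof. unfold ginv. rewrite map_rev, rev_involutive, map_map.
  induction u as [|[x e] u IH]; simpl; [reflexivity| rewrite negb_involutive; f_equal; exact IH]. Qed.

Lemma sh_ginv b u : sh b (ginv u) = ginv (sh b u).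
Proof. unfold sh, ginv. rewrite map_rev, !map_map. reflexivity. Qed.

Lemma sh_g b k a : sh b (g k a) = g k (b ++ a).
Proof. reflexivity. Qed.

Lemma ginv_cons p u : ginv (p :: u) = ginv u ++ [(fst p, negb (snd p))].
Proof. reflexivity. Qed.

Lemma inv_r0 u : geq (u ++ ginv u) [].
Proof.
  induction u as [|[x e] u IH]. reflexivity.
  rewrite ginv_cons.
  transitivity ([(x,e)] ++ (u ++ ginv u) ++ [(x, negb e)]).
  { rewrite <- app_assoc. reflexivity. }
  rewrite IH. simpl. apply geq_cancel.
Qed.

Lemma inv_l0 u : geq (ginv u ++ u) [].
Proof. pose proof (inv_r0 (ginv u)) as H. rewrite ginv_involutive in H. exact H. Qed.

Lemma inv_r u r : geq (u ++ ginv u ++ r) r.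
Proof. rewrite app_assoc, inv_r0. reflexivity. Qed.

Lemma inv_l u r : geq (ginv u ++ u ++ r) r.
Proof. rewrite app_assoc, inv_l0. reflexivity. Qed.

Lemma cancel_l w u v : geq u v -> geq (w ++ u) (w ++ v).
Proof. intro H; rewrite H; reflexivity. Qed.

Lemma is_prefix_app b a c : is_prefix (b ++ a) (b ++ c) = is_prefix a c.
Proof. induction b as [|x b IH]; simpl; [reflexivity|]. rewrite eqb_reflx. exact IH. Qed.

Lemma addr_app1 (b a : address) x : b ++ (a ++ [x]) = (b ++ a) ++ [x].
Proof. apply app_assoc. Qed.

Lemma ald_rel_sh b u v : ald_rel u v -> ald_rel (sh b u) (sh b v).
Proof.
  intro H; destruct H; rewrite ?sh_app, ?sh_g.
  - apply rel_comm; destruct H as [H1 H2]; split; rewrite is_prefix_app; assumption.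
  - pose proof (rel_S0 X (b ++ a) d) as R; unfold c0, c00, c10 in *; rewrite <- !app_assoc in R; exact R.
  - pose proof (rel_S10 X (b ++ a) d) as R; unfold c01, c10 in *; rewrite <- !app_assoc in R; exact R.
  - pose proof (rel_S11 X (b ++ a) d) as R; unfold c11 in *; rewrite <- !app_assoc in R; exact R.
  - pose proof (rel_A0 X (b ++ a) d) as R; unfold c0, c00 in *; rewrite <- !app_assoc in R; exact R.
  - pose proof (rel_A10 X (b ++ a) d) as R; unfold c01, c10 in *; rewrite <- !app_assoc in R; exact R.
  - pose proof (rel_A11 X (b ++ a) d) as R; unfold c1, c11 in *; rewrite <- !app_assoc in R; exact R.
  - pose proof (rel_SSS (b ++ a)) as R; rewrite <- !app_assoc in R; exact R.
  - pose proof (rel_SSA (b ++ a)) as R; rewrite <- !app_assoc in R; exact R.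
  - pose proof (rel_AS (b ++ a)) as R; rewrite <- !app_assoc in R; exact R.
Qed.

#[local] Instance sh_Proper b : Proper (geq ==> geq) (sh b).
Proof.
  intros u v H; induction H.
  - reflexivity.
  - symmetry; assumption.
  - etransitivity; eassumption.
  - rewrite !sh_app. apply geq_cat; assumption.
  - apply geq_cancel.
  - apply geq_rel, ald_rel_sh; assumption.
Qed.

#[local] Instance ginv_Proper : Proper (geq ==> geq) ginv.
Proof.
  intros u v H. transitivity (ginv u ++ v ++ ginv v).
  { rewrite inv_r0, app_nil_r. reflexivity. }
  transitivity (ginv u ++ u ++ ginv v).
  { apply geq_cat; [reflexivity|]. apply geq_cat; [symmetry; exact H|reflexivity]. }
  rewrite inv_l. reflexivity.
Qed.

Definition tw u z v := geq (u ++ z) (z ++ v).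

Lemma tw_app u1 u2 z v1 v2 : tw u1 z v1 -> tw u2 z v2 -> tw (u1++u2) z (v1++v2).
Proof. unfold tw; intros H1 H2. rewrite <- app_assoc, H2, app_assoc, H1, <- app_assoc. reflexivity. Qed.

Lemma tw_ginv u z v : tw u z v -> tw (ginv u) z (ginv v).
Proof.
  unfold tw; intro H.
  transitivity (ginv u ++ (z ++ v) ++ ginv v).
  { rewrite <- app_assoc, (inv_r0 v), app_nil_r. reflexivity. }
  rewrite <- H. rewrite <- app_assoc. rewrite inv_l. reflexivity.
Qed.

Lemma tw_word (f f' : gen -> gen) z :
  (forall x, tw [(f x,false)] z [(f' x,false)]) ->
  forall u, tw (map (fun p => (f (fst p), snd p)) u) z (map (fun p => (f' (fst p), snd p)) u).
Proof.
  intros H u; induction u as [|[x e] u IH].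
  - unfold tw; simpl; rewrite app_nil_r; reflexivity.
  - change (tw ([(f x, e)] ++ map (fun p => (f (fst p), snd p)) u) z
               ([(f' x, e)] ++ map (fun p => (f' (fst p), snd p)) u)).
    apply tw_app; [|exact IH].
    destruct e; [|apply H].
    exact (tw_ginv _ _ _ (H x)).
Qed.

Lemma sh_sh_ a b u : sh a (sh b u) = sh (a ++ b) u.
Proof. unfold sh; rewrite map_map; apply map_ext; intros [[k c] e]; simpl; rewrite app_assoc; reflexivity. Qed.

Definition shg (b : address) (x : gen) : gen := (fst x, b ++ snd x).

Lemma sh_map b u : sh b u = map (fun p => (shg b (fst p), snd p)) u.
Proof. reflexivity. Qed.

Lemma W1 k d u : geq (sh [true] u ++ g k (false::d)) (g k (false::d) ++ sh [true] u).
Proof.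
  rewrite sh_map. apply (tw_word (shg [true]) (shg [true])).
  intros [k' a']. apply geq_rel. apply rel_comm. split; reflexivity.
Qed.

Lemma W1w k d u r : geq (g k (false::d) ++ sh [true] u ++ r) (sh [true] u ++ g k (false::d) ++ r).
Proof. rewrite !app_assoc, W1. reflexivity. Qed.

Lemma W2 u : geq (sh [true] (sh [true] u) ++ g KS []) (g KS [] ++ sh [true] (sh [true] u)).
Proof.
  rewrite sh_sh_, sh_map. apply (tw_word (shg [true;true]) (shg [true;true])).
  intros [k' a']. exact (geq_rel _ _ (rel_S11 k' [] a')).
Qed.

Lemma W2i u : geq (ginv (sh [true] (sh [true] u)) ++ g KS []) (g KS [] ++ ginv (sh [true] (sh [true] u))).
Proof. rewrite <- !sh_ginv. apply W2. Qed.

Lemma W3 u : geq (sh [true] (sh [true] u) ++ g KA []) (g KA [] ++ sh [true] u).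
Proof.
  rewrite sh_sh_, !sh_map. apply (tw_word (shg [true;true]) (shg [true])).
  intros [k' a']. exact (geq_rel _ _ (rel_A11 k' [] a')).
Qed.

Lemma W3i u : geq (ginv (sh [true] (sh [true] u)) ++ g KA []) (g KA [] ++ ginv (sh [true] u)).
Proof. rewrite <- !sh_ginv. apply W3. Qed.

Lemma tl {x y z w : gword} : geq (x ++ y) (z ++ w) -> forall r, geq (x ++ y ++ r) (z ++ w ++ r).
Proof. intros H r. rewrite !app_assoc, H. reflexivity. Qed.

Lemma R10S k d : geq (g k (true::false::d) ++ g KS []) (g KS [] ++ g k (false::true::d)).
Proof. exact (geq_rel _ _ (rel_S10 k [] d)). Qed.
Lemma R10A k d : geq (g k (true::false::d) ++ g KA []) (g KA [] ++ g k (false::true::d)).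
Proof. exact (geq_rel _ _ (rel_A10 k [] d)). Qed.
Lemma R0S k d r : geq (g k (false::d) ++ g KS [] ++ r) (g KS [] ++ g k (false::false::d) ++ g k (true::false::d) ++ r).
Proof. rewrite !app_assoc. apply geq_cat; [|reflexivity]. rewrite <- !app_assoc. exact (geq_rel _ _ (rel_S0 k [] d)). Qed.
Lemma R0A k d : geq (g k (false::d) ++ g KA []) (g KA [] ++ g k (false::false::d)).
Proof. exact (geq_rel _ _ (rel_A0 k [] d)). Qed.
Lemma SSSt r : geq (g KS [] ++ g KS [true] ++ g KS [] ++ r) (g KS [true] ++ g KS [] ++ g KS [true] ++ g KS [false] ++ r).
Proof. rewrite !app_assoc. apply geq_cat; [|reflexivity]. rewrite <- !app_assoc. exact (geq_rel _ _ (rel_SSS [])). Qed.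
Lemma SSAt r : geq (g KS [] ++ g KS [true] ++ g KA [] ++ r) (g KA [true] ++ g KS [] ++ g KS [false] ++ r).
Proof. rewrite !app_assoc. apply geq_cat; [|reflexivity]. rewrite <- !app_assoc. exact (geq_rel _ _ (rel_SSA [])). Qed.
Lemma ASt r : geq (g KA [] ++ g KS [] ++ r) (g KS [true] ++ g KS [] ++ g KA [true] ++ g KA [false] ++ r).
Proof. rewrite !app_assoc. apply geq_cat; [|reflexivity]. rewrite <- !app_assoc. exact (geq_rel _ _ (rel_AS [])). Qed.
Lemma C01 k : geq (g k [false] ++ g k [true]) (g k [true] ++ g k [false]).
Proof. apply geq_rel, rel_comm. split; reflexivity. Qed.

Definition rootp k := match k with KS => Splus_root | KA => Aplus_root end.

Ltac norm := repeat (rewrite ?sh_app, ?ginv_app, ?sh_ginv, ?ginv_involutive, ?sh_g); cbn [app]; rewrite <- ?app_assoc.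

Lemma root_step k t t' : rootp k t = Some t' -> geq (Cc t') (Cc t ++ g k [false]).
Proof.
  destruct k; simpl; intro H; destruct t as [|t1 t23|t1 t23]; try discriminate;
  destruct t23 as [|t2 t3|t2 t3]; try discriminate; injection H as <-; cbn [Cc]; norm.
  - apply cancel_l, cancel_l. rewrite inv_l.
    rewrite <- (tl (W2 (Cc t3))). apply cancel_l.
    rewrite (tl (W2i (Cc t1))), inv_l, SSSt. apply cancel_l.
    rewrite (tl (W2i (Cc t2))). apply cancel_l.
    rewrite <- (tl (C01 KS)), inv_r.
    rewrite <- !sh_ginv. rewrite W1w. rewrite <- W1. reflexivity.
  - apply cancel_l, cancel_l. rewrite inv_l.
    rewrite <- (tl (W2 (Cc t3))). apply cancel_l.
    rewrite W3i, SSAt. apply cancel_l, cancel_l.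
    rewrite <- !sh_ginv. rewrite <- W1. reflexivity.
  - apply cancel_l, cancel_l.
    rewrite <- (tl (W3 (Cc t3))). apply cancel_l.
    rewrite ASt. apply cancel_l.
    rewrite (tl (W2i (Cc t2))). apply cancel_l.
    rewrite <- (tl (C01 KA)), inv_r.
    rewrite <- !sh_ginv. rewrite W1w. rewrite <- W1. reflexivity.
Qed.

Lemma plus_step k a : forall t t', at_addr (rootp k) a t = Some t' -> geq (Cc t') (Cc t ++ g k (false::a)).
Proof.
  induction a as [|b a IH]; intros t t' H.
  - exact (root_step k t t' H).
  - destruct t as [|t1 t2|t1 t2]; [discriminate| |]; simpl in H; destruct b.
    + destruct (at_addr (rootp k) a t2) as [t0|] eqn:E; [|discriminate].
      simpl in H; injection H as <-. cbn [Cc]. rewrite (IH _ _ E), sh_app, sh_g.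
      change ([true] ++ false :: a) with (true::false::a). rewrite <- !app_assoc.
      apply cancel_l, cancel_l. rewrite app_assoc, R10S, <- app_assoc. apply cancel_l.
      rewrite <- sh_ginv. symmetry. apply W1.
    + destruct (at_addr (rootp k) a t1) as [t0|] eqn:E; [|discriminate].
      simpl in H; injection H as <-. cbn [Cc]. rewrite (IH _ _ E), sh_app, ginv_app, sh_g.
      change ([true] ++ false :: a) with (true::false::a). rewrite <- !app_assoc.
      apply cancel_l. rewrite W1w. apply cancel_l.
      rewrite R0S. apply cancel_l. rewrite inv_r.
      rewrite <- sh_ginv. symmetry. apply W1.
    + destruct (at_addr (rootp k) a t2) as [t0|] eqn:E; [|discriminate].
      simpl in H; injection H as <-. cbn [Cc]. rewrite (IH _ _ E), sh_app, sh_g.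
      change ([true] ++ false :: a) with (true::false::a). rewrite <- !app_assoc.
      apply cancel_l, cancel_l. apply R10A.
    + destruct (at_addr (rootp k) a t1) as [t0|] eqn:E; [|discriminate].
      simpl in H; injection H as <-. cbn [Cc]. rewrite (IH _ _ E).
      rewrite <- !app_assoc.
      apply cancel_l. rewrite W1w. apply cancel_l. apply R0A.
Qed.

Lemma at_addr_inv (f f' : term -> option term) :
  (forall t t', f t = Some t' -> f' t' = Some t) ->
  forall a t t', at_addr f a t = Some t' -> at_addr f' a t' = Some t.
Proof.
  intros Hf a; induction a as [|b a IH]; intros t t' H; simpl in *; [auto|].
  destruct t as [|t1 t2|t1 t2]; [discriminate| |]; destruct b;
  [destruct (at_addr f a t2) eqn:E|destruct (at_addr f a t1) eqn:E|
   destruct (at_addr f a t2) eqn:E|destruct (at_addr f a t1) eqn:E];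
  simpl in H; try discriminate; injection H as <-; simpl; rewrite (IH _ _ E); reflexivity.
Qed.

Lemma Sminus_inv t t' : Sminus_root t = Some t' -> Splus_root t' = Some t.
Proof.
  intro H; destruct t as [|x y|x y]; try discriminate;
  destruct x as [|t1 t2|t1 t2]; try discriminate;
  destruct y as [|t3 t4|t3 t4]; try discriminate; simpl in H;
  destruct (term_eq_dec t1 t3); try discriminate; injection H as <-; subst; reflexivity.
Qed.

Lemma Aminus_inv t t' : Aminus_root t = Some t' -> Aplus_root t' = Some t.
Proof.
  intro H; destruct t as [|x y|x y]; try discriminate;
  destruct x as [|t1 t2|t1 t2]; try discriminate; simpl in H; injection H as <-; reflexivity.
Qed.

Lemma minus_fix u t t' : geq t (t' ++ u) -> geq t' (t ++ ginv u).
Proof. intro P. rewrite P, <- app_assoc, inv_r0, app_nil_r. reflexivity. Qed.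

Lemma letter_step l t t' : eval_letter l t = Some t' -> geq (Cc t') (Cc t ++ sh [false] [evalG_letter l]).
Proof.
  intro H; destruct l as [[|] a|[|] a].
  - exact (plus_step KS a t t' H).
  - change (geq (Cc t') (Cc t ++ ginv (g KS (false::a)))). apply minus_fix.
    exact (plus_step KS a t' t (at_addr_inv _ _ Sminus_inv a t t' H)).
  - exact (plus_step KA a t t' H).
  - change (geq (Cc t') (Cc t ++ ginv (g KA (false::a)))). apply minus_fix.
    exact (plus_step KA a t' t (at_addr_inv _ _ Aminus_inv a t t' H)).
Qed.

Theorem lemma3p8 : forall (t : term) (w : word) (t' : term),
  eval w t = Some t' ->
  geq (Cc t') (Cc t ++ sh [false] (evalG w)).
Proof.
  intros t w; revert t; induction w as [|l w IH]; intros t t' H; cbn [eval] in H.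
  - injection H as <-. simpl. rewrite app_nil_r. reflexivity.
  - destruct (eval_letter l t) as [t1|] eqn:E; [|discriminate].
    rewrite (IH _ _ H), (letter_step _ _ _ E), <- app_assoc. reflexivity.
Qed.
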